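(* Let $n\ge1$ and let $\chi$ be a character of $S_n$. Then $d_\chi^{S_n}(AB)=d_\chi^{S_n}(BA)$ for all $A,B\in\mathbb S_n(\mathbb C)$.
   Context: A character of $S_n$ is a function $g\mapsto\operatorname{tr}(\rho(g))$ for some homomorphism $\rho:S_n\to GL_m(\mathbb C)$, $m\ge1$. $\mathbb S_n(\mathbb C)$ is the set of complex symmetric $n\times n$ matrices. $d_\chi^{S_n}(A)=\sum_{\sigma\in S_n}\chi(\sigma)\prod_{i=1}^n A_{i\,\sigma(i)}$. *)

(* Defs.v *)
From HB Require Import structures.
From mathcomp Require Import all_boot all_order all_algebra all_fingroup all_character.
Set Implicit Arguments. Unset Strict Implicit. Unset Printing Implicit Defensive.
Import GRing.Theory Num.Theory.
Local Open Scope ring_scope.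

(* A character of S_n (over the field C): g |-> tr(rho g) for a group
   homomorphism rho : S_n -> GL_m(C), m >= 1. A matrix representation
   (rho 1 = 1, rho multiplicative) automatically has invertible values. *)
Definition is_character_Sn (C : fieldType) (n : nat) (chi : 'S_n -> C) : Prop :=
  exists m : nat, (0 < m)%N /\
    exists rho : mx_representation C [set: 'S_n] m,
      forall g : 'S_n, chi g = \tr (rho g).

Definition immanant (C : fieldType) (n : nat) (chi : 'S_n -> C) (A : 'M[C]_n) : C :=
  \sum_(s : 'S_n) chi s * \prod_(i < n) A i (s i).

Definition symmetric_mx (C : fieldType) (n : nat) (A : 'M[C]_n) : Prop := A^T = A.

(* Main.v *)
Require Import Defs.
From HB Require Import structures.
From mathcomp Require Import all_boot all_order all_algebra all_fingroup all_character.
From mathcomp Require Import zify.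
Set Implicit Arguments. Unset Strict Implicit. Unset Printing Implicit Defensive.

Section Inv.
Variables (T : finType) (f : T -> T).
Hypothesis injf : injective f.

Let Hsym : connect_sym (frel f) := fconnect_sym injf.

Definition rr x := froot f x.
Definition kk x := findex f (rr x) x.
Definition oo x := fingraph.order f (rr x).
Definition hh x := iter (oo x - kk x) f (rr x).

Lemma conn_r x : fconnect f (rr x) x.
Proof. by rewrite fconnect_sym //; apply: connect_root. Qed.

Lemma rr_conn x y : fconnect f x y -> rr y = rr x.
Proof. by move=> H; apply/esym/eqP; rewrite /rr (root_connect Hsym). Qed.

Lemma rr_f x : rr (f x) = rr x.
Proof. exact/rr_conn/fconnect1. Qed.

Lemma rr_iter x m : rr (iter m f (rr x)) = rr x.
Proof. by rewrite (rr_conn (fconnect_iter f m (rr x))) /rr root_root. Qed.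

Lemma iter_mul y q : iter (q * fingraph.order f y) f y = y.
Proof.
elim: q => [|q IH] //=.
by rewrite mulSn iterD IH iter_order.
Qed.

Lemma iter_mod y m : iter m f y = iter (m %% fingraph.order f y) f y.
Proof.
rewrite {1}(divn_eq m (fingraph.order f y)) addnC iterD iter_mul //.
Qed.

Lemma kk_lt x : kk x < oo x.
Proof. exact/findex_max/conn_r. Qed.

Lemma kk_iter x : iter (kk x) f (rr x) = x.
Proof. exact/iter_findex/conn_r. Qed.

Lemma key1 x : f (hh (f x)) = hh x.
Proof.
rewrite /hh /oo /kk rr_f -/(oo x).
have Ex := kk_iter x; have Hk := kk_lt x.
rewrite -/(rr x) -/(kk x).
case: (ltnP (kk x).+1 (oo x)) => Hk1.
  have -> : f x = iter (kk x).+1 f (rr x) by rewrite iterS Ex.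
  by rewrite findex_iter // -iterS subnSK.
have E : kk x = (oo x).-1 by move: Hk Hk1; clear; lia.
have -> : f x = rr x.
  by rewrite -{1}Ex -iterS E prednK ?iter_order //; exact: (leq_ltn_trans _ Hk).
rewrite findex0 subn0 iter_order //.
have -> : oo x - kk x = 1 by move: Hk Hk1; clear; lia.
by [].
Qed.

Lemma key2 x : hh (hh x) = x.
Proof.
have Ex := kk_iter x; have Hk := kk_lt x.
rewrite {1}/hh /oo /kk.
rewrite /hh rr_iter.
rewrite (iter_mod (rr x) (oo x - kk x)) -/(oo x).
rewrite findex_iter; last by rewrite ltn_pmod // fingraph.order_gt0.
transitivity (iter (kk x) f (rr x)); last exact: Ex.
have Ho : 0 < oo x by apply: fingraph.order_gt0.
case: (posnP (kk x)) => Hk0.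
  by rewrite Hk0 subn0 modnn subn0 iter_order.
rewrite modn_small; last by move: Hk Hk0; clear; lia.
by have -> : oo x - (oo x - kk x) = kk x by move: Hk; clear; lia.
Qed.

End Inv.

Import GRing.Theory.
Local Open Scope ring_scope.

Lemma perm_inv_conj (n : nat) (s : 'S_n) : exists h : 'S_n, (s^-1)%g = (s ^ h)%g.
Proof.
have inj := (@perm_inj _ s).
set h := perm (can_inj (key2 inj)).
exists h.
apply/permP => x; rewrite /conjg !permM.
rewrite -{1}(permKV h x); move: (h^-1 x)%g => y.
rewrite [h y]permE -(key1 inj y) permK permE.
by [].
Qed.



Lemma char_inv (C : fieldType) (n : nat) (chi : 'S_n -> C) :
  is_character_Sn chi -> forall s : 'S_n, chi (s^-1)%g = chi s.
Proof.
move=> [m [_ [rho Hrho]]] s.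
have [h ->] := perm_inv_conj s.
rewrite !Hrho /conjg !repr_mxM ?in_setT // mxtrace_mulC -mulmxA -repr_mxM ?in_setT //.
by rewrite mulgV repr_mx1 mulmx1.
Qed.

Lemma immanant_tr (C : fieldType) (n : nat) (chi : 'S_n -> C) (M : 'M[C]_n) :
  (forall s : 'S_n, chi (s^-1)%g = chi s) -> immanant chi M^T = immanant chi M.
Proof.
move=> Hchi; rewrite /immanant (reindex_inj invg_inj) /=.
apply: eq_bigr => s _; rewrite Hchi; congr (_ * _).
rewrite [RHS](reindex_inj (@perm_inj _ (s^-1)%g)) /=.
by apply: eq_bigr => i _; rewrite mxE permKV.
Qed.

Theorem mainTheorem12 (C : numClosedFieldType) (n : nat) (hn : (1 <= n)%N)
  (chi : 'S_n -> C) (hchi : is_character_Sn chi)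
  (A B : 'M[C]_n) (hA : symmetric_mx A) (hB : symmetric_mx B) :
  immanant chi (A *m B) = immanant chi (B *m A).
Proof.
have -> : B *m A = (A *m B)^T by rewrite trmx_mul hA hB.
by rewrite immanant_tr //; apply: char_inv.
Qed.
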